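(* Let $X$ be a locale with frame presentation $\mathcal{O}X=\langle G\mid R\rangle$ and let $\overline{q}\colon\mathcal{O}(\Sigma^G)\twoheadrightarrow\mathcal{O}X$ be the quotient frame homomorphism. Equip $\mathcal{O}(\Sigma^G)$ with its Scott topology. Then the quotient topology on the set $\mathcal{O}X$ induced by the surjection $\overline{q}$ is exactly the Scott topology on $\mathcal{O}X$; that is, a subset $U\subseteq\mathcal{O}X$ is Scott-open if and only if $\overline{q}^{-1}(U)$ is Scott-open in $\mathcal{O}(\Sigma^G)$.
   Context: A frame is a complete lattice in which finite meets distribute over arbitrary joins. For a set $G$, $\mathcal{O}(\Sigma^G)$ denotes the free frame on $G$. A presentation $\mathcal{O}X=\langle G\mid R\rangle$ means $\mathcal{O}X$ is the quotient of the free frame on $G$ by the frame congruence generated by $R$; $\overline{q}$ is the corresponding surjective frame homomorphism. For a poset $L$ with directed joins, a subset $V\subseteq L$ is Scott-open if it is upward closed and whenever the join of a directed set $D$ lies in $V$, some $d\in D$ lies in $V$ (a set is directed if every finite subset has an upper bound in it). *)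

(* Defs.v *)
From Stdlib Require Import List.

Record Frame := {
  carrier :> Type;
  le : carrier -> carrier -> Prop;
  le_refl : forall x, le x x;
  le_trans : forall x y z, le x y -> le y z -> le x z;
  le_antisym : forall x y, le x y -> le y x -> x = y;
  join : (carrier -> Prop) -> carrier;
  join_ub : forall (S : carrier -> Prop) x, S x -> le x (join S);
  join_least : forall (S : carrier -> Prop) y,
      (forall x, S x -> le x y) -> le (join S) y;
  meet : carrier -> carrier -> carrier;
  meet_lb1 : forall x y, le (meet x y) x;
  meet_lb2 : forall x y, le (meet x y) y;
  meet_glb : forall x y z, le z x -> le z y -> le z (meet x y);
  top : carrier;
  top_max : forall x, le x top;
  meet_join_distr : forall (a : carrier) (S : carrier -> Prop),
      meet a (join S) = join (fun y => exists x, S x /\ y = meet a x)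
}.

Arguments le {f} _ _.
Arguments join {f} _.
Arguments meet {f} _ _.
Arguments top {f}.

Definition fjoin {L : Frame} {I : Type} (f : I -> L) : L :=
  join (fun y => exists i, y = f i).

Definition frame_hom {L M : Frame} (h : L -> M) : Prop :=
  h top = top /\
  (forall x y, h (meet x y) = meet (h x) (h y)) /\
  (forall S : L -> Prop, h (join S) = join (fun y => exists x, S x /\ y = h x)).

Definition is_free_frame (G : Type) (F : Frame) (eta : G -> F) : Prop :=
  forall (M : Frame) (f : G -> M),
    exists h : F -> M, frame_hom h /\ (forall g, h (eta g) = f g) /\
      (forall h' : F -> M, frame_hom h' -> (forall g, h' (eta g) = f g) ->
         forall x, h' x = h x).

Definition frame_congruence {L : Frame} (E : L -> L -> Prop) : Prop :=
  (forall x, E x x) /\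
  (forall x y, E x y -> E y x) /\
  (forall x y z, E x y -> E y z -> E x z) /\
  (forall a b c d, E a b -> E c d -> E (meet a c) (meet b d)) /\
  (forall (I : Type) (f g : I -> L), (forall i, E (f i) (g i)) ->
       E (fjoin f) (fjoin g)).

Definition gen_congruence {L : Frame} (R : L -> L -> Prop) (x y : L) : Prop :=
  forall E : L -> L -> Prop, frame_congruence E ->
    (forall a b, R a b -> E a b) -> E x y.

Definition directed {L : Frame} (D : L -> Prop) : Prop :=
  forall l : list L, (forall x, In x l -> D x) ->
    exists u, D u /\ forall x, In x l -> le x u.

Definition scott_open {L : Frame} (V : L -> Prop) : Prop :=
  (forall x y, V x -> le x y -> V y) /\
  (forall D : L -> Prop, directed D -> V (join D) -> exists d, D d /\ V d).

(* Main.v *)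
Require Import Defs.
From Stdlib Require Import List.

Section S.
Variables (F OX : Frame) (q : F -> OX) (Hhom : frame_hom q).

Lemma q_mono : forall x y : F, le x y -> le (q x) (q y).
Proof.
  intros x y H. destruct Hhom as [_ [Hm _]].
  assert (E : meet x y = x).
  { apply le_antisym. apply meet_lb1. apply meet_glb. apply le_refl. exact H. }
  rewrite <- E, Hm. apply meet_lb2.
Qed.

Lemma q_join_list : forall (w : F) (l : list F),
  (forall x, In x l -> le (q x) (q w)) ->
  q (join (fun z => z = w \/ In z l)) = q w.
Proof.
  intros w l H. destruct Hhom as [_ [_ Hj]]. rewrite Hj.
  apply le_antisym.
  - apply join_least. intros y [x [[-> | Hin] ->]]. apply le_refl. auto.
  - apply join_ub. exists w. auto.
Qed.

Lemma lift_list : forall (D : F -> Prop) (l : list OX),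
  (forall x, In x l -> exists d, D d /\ x = q d) ->
  exists l', (forall d, In d l' -> D d) /\ forall x, In x l -> exists d, In d l' /\ x = q d.
Proof.
  intros D l. induction l as [|a l IH]; intros H.
  - exists nil. split; intros x []. 
  - destruct (H a (or_introl eq_refl)) as [d [Dd ->]].
    destruct IH as [l' [H1 H2]]. intros x Hx. apply H; right; auto.
    exists (d :: l'). split.
    + intros e [<- | He]; auto.
    + intros x [<- | Hx]. exists d; split; simpl; auto.
      destruct (H2 x Hx) as [e [He ->]]. exists e; split; simpl; auto.
Qed.
End S.

Theorem mainTheorem3 (G : Type) (F : Frame) (eta : G -> F)
  (Hfree : is_free_frame G F eta)
  (R : F -> F -> Prop)
  (OX : Frame) (q : F -> OX)
  (Hhom : frame_hom q)
  (Hsurj : forall y : OX, exists x : F, q x = y)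
  (Hker : forall x y : F, q x = q y <-> gen_congruence R x y) :
  forall U : OX -> Prop, scott_open U <-> scott_open (fun x : F => U (q x)).
Proof.
  intros U. split.
  - intros [Hup Hdir]. split.
    + intros x y Hx Hxy. eapply Hup. exact Hx. apply q_mono; auto.
    + intros D HD HU.
      assert (Hj := proj2 (proj2 Hhom) D). rewrite Hj in HU.
      destruct (Hdir _ ltac:(intros l Hl;
        destruct (lift_list F OX q D l Hl) as [l' [H1 H2]];
        destruct (HD l' H1) as [u [Du Hu]];
        exists (q u); split; [exists u; split; auto |];
        intros x Hx; destruct (H2 x Hx) as [e [He ->]]; apply q_mono; auto) HU)
        as [d [[x [Dx ->]] Ud]].
      exists x; auto.
  - intros [Hup Hdir]. split.
    + intros x y Hx Hxy. destruct (Hsurj x) as [a <-]. destruct (Hsurj y) as [b <-].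
      rewrite <- (q_join_list F OX q Hhom b (a :: nil)).
      * apply (Hup a). exact Hx. apply join_ub. right. left. auto.
      * intros z [<- | []]. auto.
    + intros D HD HU.
      set (D' := fun x : F => D (q x)).
      assert (HD' : directed D').
      { intros l Hl.
        destruct (HD (map q l)) as [u [Du Hu]].
        { intros x Hx. apply in_map_iff in Hx. destruct Hx as [y [<- Hy]]. apply Hl; auto. }
        destruct (Hsurj u) as [w <-].
        exists (join (fun z => z = w \/ In z l)). split.
        - unfold D'. rewrite q_join_list; auto.
          intros x Hx. apply Hu. apply in_map; auto.
        - intros x Hx. apply join_ub. auto. }
      assert (Eq : q (join D') = join D).
      { rewrite (proj2 (proj2 Hhom)). apply le_antisym.
        - apply join_least. intros y [x [Dx ->]]. apply join_ub. exact Dx.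
        - apply join_least. intros y Dy. destruct (Hsurj y) as [x <-].
          apply join_ub. exists x. split; auto. }
      destruct (Hdir D' HD') as [d [Dd Ud]].
      { rewrite Eq. exact HU. }
      exists (q d). split; auto.
Qed.
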